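(* Consider an agent-dependent SDP performance estimation problem for distributed optimization with $n\ge2$ agents in which all agents are equivalent, and let $(F,G)$ with $F=[f_1^T\dots f_n^T]$, $G=[G_{ij}]$ be any feasible solution. Define $f^A=\frac1n\sum_{i=1}^nf_i\in\mathbb{R}^q$, $G^A=\frac1n\sum_{i=1}^nG_{ii}\in\mathbb{R}^{p\times p}$, $G^C=\frac{1}{n(n-1)}\sum_{i=1}^n\sum_{j\ne i}G_{ij}\in\mathbb{R}^{p\times p}$, and let $F^s=[(f^A)^T\dots(f^A)^T]$ and $G^s\in\mathbb{R}^{np\times np}$ be the block matrix with all diagonal blocks equal to $G^A$ and all off-diagonal blocks equal to $G^C$. Then $(F^s,G^s)$ is feasible for the PEP and has the same objective value as $(F,G)$.
   Context: In the agent-dependent SDP PEP, each agent $i$ holds $p$ vector variables (iterates, consensus outputs, gradients, copies of common points such as $x^*$), gathered as columns of $P_i\in\mathbb{R}^{d\times p}$ in the same order for all agents, and $q$ function values in $f_i\in\mathbb{R}^q$; the variables are $F=[f_1^T\dots f_n^T]$ and $G=P^TP\succeq0$, $P=[P_1\dots P_n]$, $G_{ij}=P_i^TP_j$. The objective (performance criterion) and all constraints (algorithm, function-class interpolation, initial conditions, optimality condition $\frac1n\sum_i\nabla f_i(x^* )=0$, consensus constraints) are linear or linear-matrix-inequality constraints in $(F,G)$, plus $G\succeq0$. Agents $i,j$ are equivalent if for every feasible $(F,G)$, swapping the blocks of agents $i$ and $j$ in $F$ and in the block rows/columns of $G$ gives a feasible solution with the same objective value; ''all agents equivalent'' means every pair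 of agents is equivalent. *)

(* Defs.v *)
From HB Require Import structures.
From mathcomp Require Import all_boot all_order all_algebra all_fingroup.
Set Implicit Arguments. Unset Strict Implicit. Unset Printing Implicit Defensive.
Import Order.TTheory GRing.Theory Num.Theory.
Local Open Scope ring_scope.

Definition psd (R : realFieldType) (d : nat) (M : 'M[R]_d) : Prop :=
  M^T = M /\ forall x : 'cV[R]_d, 0 <= (x^T *m M *m x) 0 0.

(* Variables of the agent-dependent PEP:
   F : 'M_(n,q), row i is f_i^T  (so F = [f_1^T ... f_n^T] reshaped);
   G : 'I_n -> 'I_n -> 'M_p, G i j is the block G_ij = P_i^T P_j.
   The big matrix G = [G_ij] is PSD: block symmetric and nonnegative
   quadratic form on block vectors x = (x_1,...,x_n). *)
Definition block_psd (R : realFieldType) (n p : nat)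
  (G : 'I_n -> 'I_n -> 'M[R]_p) : Prop :=
  (forall i j, (G i j)^T = G j i) /\
  forall x : 'I_n -> 'cV[R]_p,
    0 <= \sum_i \sum_j ((x i)^T *m G i j *m x j) 0 0.

(* An abstract SDP PEP: an arbitrary family of linear matrix inequality
   constraints (affine in (F,G)); linear (in)equalities are 1x1 LMIs.
   The objective is an affine function of (F,G). *)
Record PEP (R : realFieldType) (n p q : nat) := {
  cI : Type;
  cdim : cI -> nat;
  cC : forall c, 'M[R]_(cdim c);
  cF : forall c, 'I_n -> 'I_q -> 'M[R]_(cdim c);
  cG : forall c, 'I_n -> 'I_n -> 'I_p -> 'I_p -> 'M[R]_(cdim c);
  o0 : R;
  oF : 'I_n -> 'I_q -> R;
  oG : 'I_n -> 'I_n -> 'I_p -> 'I_p -> R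
}.

Section PEPdefs.
Variables (R : realFieldType) (n p q : nat) (P : PEP R n p q).

Definition lmi_val (c : cI P) (F : 'M[R]_(n, q)) (G : 'I_n -> 'I_n -> 'M[R]_p)
  : 'M[R]_(cdim c) :=
  cC c + \sum_i \sum_k F i k *: cF c i k
       + \sum_i \sum_j \sum_k \sum_l G i j k l *: cG c i j k l.

Definition feasible (F : 'M[R]_(n, q)) (G : 'I_n -> 'I_n -> 'M[R]_p) : Prop :=
  block_psd G /\ forall c : cI P, psd (lmi_val c F G).

Definition objective (F : 'M[R]_(n, q)) (G : 'I_n -> 'I_n -> 'M[R]_p) : R :=
  o0 P + \sum_i \sum_k oF P i k * F i k
       + \sum_i \sum_j \sum_k \sum_l oG P i j k l * G i j k l.

Definition permF (s : 'S_n) (F : 'M[R]_(n, q)) : 'M[R]_(n, q) :=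
  \matrix_(i, k) F (s i) k.
Definition permG (s : 'S_n) (G : 'I_n -> 'I_n -> 'M[R]_p) :
  'I_n -> 'I_n -> 'M[R]_p := fun i j => G (s i) (s j).

Definition agents_equivalent (i j : 'I_n) : Prop :=
  forall F G, feasible F G ->
    feasible (permF (tperm i j) F) (permG (tperm i j) G) /\
    objective (permF (tperm i j) F) (permG (tperm i j) G) = objective F G.

Definition all_agents_equivalent : Prop :=
  forall i j : 'I_n, agents_equivalent i j.

End PEPdefs.

Section Sym.
Variables (R : realFieldType) (n p q : nat).

Definition fA (F : 'M[R]_(n, q)) : 'rV[R]_q := (n%:R)^-1 *: \sum_i row i F.
Definition GA (G : 'I_n -> 'I_n -> 'M[R]_p) : 'M[R]_p :=
  (n%:R)^-1 *: \sum_i G i i.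
Definition GC (G : 'I_n -> 'I_n -> 'M[R]_p) : 'M[R]_p :=
  ((n * (n - 1))%:R)^-1 *: \sum_i \sum_(j | j != i) G i j.

Definition Fsym (F : 'M[R]_(n, q)) : 'M[R]_(n, q) := \matrix_(i, k) fA F 0 k.
Definition Gsym (G : 'I_n -> 'I_n -> 'M[R]_p) : 'I_n -> 'I_n -> 'M[R]_p :=
  fun i j => if i == j then GA G else GC G.
End Sym.

(* Main.v *)
Require Import Defs.
From HB Require Import structures.
From mathcomp Require Import all_boot all_order all_algebra all_fingroup.
From Stdlib Require Import FunctionalExtensionality.
Set Implicit Arguments. Unset Strict Implicit. Unset Printing Implicit Defensive.
Import Order.TTheory GRing.Theory Num.Theory.
Local Open Scope ring_scope.

Section Aux.
Variable R : realFieldType.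

Lemma quad_lin (d : nat) (S : finType) (a : R) (M : S -> 'M[R]_d)
  (u : 'M[R]_(1, d)) (v : 'M[R]_(d, 1)) :
  (u *m (a *: \sum_s M s) *m v) 0 0 = a * \sum_s (u *m M s *m v) 0 0.
Proof.
rewrite -scalemxAr -scalemxAl mulmx_sumr mulmx_suml mxE summxE; congr (_ * _).
Qed.

Lemma psd_avg (d : nat) (S : finType) (a : R) (M : S -> 'M[R]_d) :
  0 <= a -> (forall s, psd (M s)) -> psd (a *: \sum_s M s).
Proof.
move=> a0 HM; split.
  rewrite linearZ /= linear_sum /=; congr (_ *: _); apply: eq_bigr => s _.
  by case: (HM s).
move=> x; rewrite quad_lin; apply: mulr_ge0 => //; apply: sumr_ge0 => s _.
by case: (HM s) => _ ->.
Qed.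

Lemma bpsd_avg (n p : nat) (S : finType) (a : R)
  (Gs : S -> 'I_n -> 'I_n -> 'M[R]_p) :
  0 <= a -> (forall s, block_psd (Gs s)) ->
  block_psd (fun i j => a *: \sum_s Gs s i j).
Proof.
move=> a0 HG; split.
  move=> i j; rewrite linearZ /= linear_sum /=; congr (_ *: _).
  by apply: eq_bigr => s _; case: (HG s) => ->.
move=> x.
have -> : \sum_i \sum_j ((x i)^T *m (a *: \sum_s Gs s i j) *m x j) 0 0
   = a * \sum_s \sum_i \sum_j ((x i)^T *m Gs s i j *m x j) 0 0.
  rewrite mulr_sumr; under [RHS]eq_bigr do rewrite mulr_sumr.
  rewrite [RHS]exchange_big /=; apply: eq_bigr => i _.
  under [RHS]eq_bigr do rewrite mulr_sumr.
  rewrite [RHS]exchange_big /=; apply: eq_bigr => j _.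
  by rewrite quad_lin mulr_sumr.
apply: mulr_ge0 => //; apply: sumr_ge0 => s _; by case: (HG s) => _ ->.
Qed.

Lemma swap3 (V : nmodType) (I J S : finType) (h : S -> I -> J -> V) :
  \sum_s \sum_i \sum_j h s i j = \sum_i \sum_j \sum_s h s i j.
Proof. by rewrite exchange_big; apply: eq_bigr => i _; rewrite exchange_big. Qed.

Lemma avg2 (V : lmodType R) (I J S : finType) (a : R) (f : S -> I -> J -> R)
  (C : I -> J -> V) :
  \sum_i \sum_j (a * \sum_s f s i j) *: C i j
  = a *: \sum_s \sum_i \sum_j f s i j *: C i j.
Proof.
rewrite [in RHS]swap3 scaler_sumr; apply: eq_bigr => i _.
rewrite scaler_sumr; apply: eq_bigr => j _.
by rewrite mulr_sumr scaler_suml scaler_sumr; apply: eq_bigr => s _; rewrite scalerA.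
Qed.

Lemma avg4 (V : lmodType R) (I J K L S : finType) (a : R)
  (f : S -> I -> J -> K -> L -> R) (C : I -> J -> K -> L -> V) :
  \sum_i \sum_j \sum_k \sum_l (a * \sum_s f s i j k l) *: C i j k l
  = a *: \sum_s \sum_i \sum_j \sum_k \sum_l f s i j k l *: C i j k l.
Proof.
rewrite [in RHS]swap3 scaler_sumr; apply: eq_bigr => i _.
rewrite scaler_sumr; apply: eq_bigr => j _.
by rewrite avg2.
Qed.

Lemma avg2m (I J S : finType) (a : R) (f : S -> I -> J -> R) (C : I -> J -> R) :
  \sum_i \sum_j C i j * (a * \sum_s f s i j)
  = a * \sum_s \sum_i \sum_j C i j * f s i j.
Proof.
rewrite [in RHS]swap3 mulr_sumr; apply: eq_bigr => i _.
rewrite mulr_sumr; apply: eq_bigr => j _.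
rewrite !mulr_sumr; apply: eq_bigr => s _.
by rewrite mulrCA.
Qed.

Lemma avg4m (I J K L S : finType) (a : R)
  (f : S -> I -> J -> K -> L -> R) (C : I -> J -> K -> L -> R) :
  \sum_i \sum_j \sum_k \sum_l C i j k l * (a * \sum_s f s i j k l)
  = a * \sum_s \sum_i \sum_j \sum_k \sum_l C i j k l * f s i j k l.
Proof.
rewrite [in RHS]swap3 mulr_sumr; apply: eq_bigr => i _.
rewrite mulr_sumr; apply: eq_bigr => j _.
by rewrite avg2m.
Qed.

Lemma solve_scal (V : lmodType R) (n N : nat) (M T : V) :
  (n != 0)%N -> (N != 0)%N -> n%:R *: M = N%:R *: T ->
  (N%:R)^-1 *: M = (n%:R)^-1 *: T.
Proof.
move=> n0 N0 e.
have n0' : (n%:R : R) != 0 by rewrite pnatr_eq0.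
have N0' : (N%:R : R) != 0 by rewrite pnatr_eq0.
have -> : M = (n%:R)^-1 *: (n%:R *: M) by rewrite scalerA mulVf // scale1r.
by rewrite e !scalerA; congr (_ *: _); rewrite mulrAC mulVf // mul1r.
Qed.

Lemma solve_mul (n N : nat) (M T : R) :
  (n != 0)%N -> (N != 0)%N -> n%:R * M = N%:R * T ->
  (N%:R)^-1 * M = (n%:R)^-1 * T.
Proof.
move=> n0 N0 e.
have n0' : (n%:R : R) != 0 by rewrite pnatr_eq0.
have N0' : (N%:R : R) != 0 by rewrite pnatr_eq0.
have -> : M = (n%:R)^-1 * (n%:R * M) by rewrite mulrA mulVf // mul1r.
by rewrite e !mulrA; congr (_ * _); rewrite mulrAC mulVf // mul1r.
Qed.

End Aux.

Theorem corollary1 (R : realFieldType) (n p q : nat) (P : PEP R n p q)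
  (F : 'M[R]_(n, q)) (G : 'I_n -> 'I_n -> 'M[R]_p) :
  (2 <= n)%N ->
  all_agents_equivalent P ->
  feasible P F G ->
  feasible P (Fsym F) (Gsym G) /\
  objective P (Fsym F) (Gsym G) = objective P F G.
Proof.
move=> n2 Heq Hfeas.
set N := #|{perm 'I_n}|.
set a : R := (N%:R)^-1.
have N0 : (N != 0)%N by rewrite /N card_Sn -lt0n fact_gt0.
have n0 : (n != 0)%N by case: n n2 {F G P Heq Hfeas N N0 a}.
have aN : a * N%:R = 1 by rewrite /a mulVf // pnatr_eq0.
have a0 : 0 <= a by rewrite /a invr_ge0 ler0n.
have sumN : forall (V : nmodType) (x : V), \sum_(s : {perm 'I_n}) x = x *+ N.
  by move=> V x; rewrite sumr_const.
have perm_ok : forall s : {perm 'I_n}, forall F0 G0, feasible P F0 G0 ->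
    feasible P (permF s F0) (permG s G0) /\
    objective P (permF s F0) (permG s G0) = objective P F0 G0.
  move=> s; case: (prod_tpermP s) => ts -> _ {s}.
  elim: ts => [|t ts IH] F0 G0 HF.
    rewrite big_nil.
    have -> : permF 1 F0 = F0 by apply/matrixP => i k; rewrite mxE perm1.
    have -> : permG 1 G0 = G0.
      by apply: functional_extensionality => i; apply: functional_extensionality => j;
         rewrite /permG !perm1.
    by [].
  rewrite big_cons.
  have -> : permF (tperm t.1 t.2 * \prod_(t0 <- ts) tperm t0.1 t0.2)%g F0
      = permF (tperm t.1 t.2) (permF (\prod_(t0 <- ts) tperm t0.1 t0.2)%g F0).
    by apply/matrixP => i k; rewrite !mxE permM.
  have -> : permG (tperm t.1 t.2 * \prod_(t0 <- ts) tperm t0.1 t0.2)%g G0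
      = permG (tperm t.1 t.2) (permG (\prod_(t0 <- ts) tperm t0.1 t0.2)%g G0).
    by apply: functional_extensionality => i; apply: functional_extensionality => j;
       rewrite /permG !permM.
  case: (IH F0 G0 HF) => HF' HO'.
  case: (Heq t.1 t.2 _ _ HF') => HF'' HO''.
  by split => //; rewrite HO'' HO'.
pose Fav := a *: \sum_(s : {perm 'I_n}) permF s F.
pose Gav := fun i j => a *: \sum_(s : {perm 'I_n}) permG s G i j.
have eF : Fsym F = Fav.
  apply/matrixP => i k.
  rewrite /Fsym /Fav /fA !mxE !summxE.
  under [in RHS]eq_bigr do rewrite mxE.
  under [in LHS]eq_bigr do rewrite mxE.
  set T := \sum_(m < n) F m k.
  pose S0 := fun m => \sum_(s : {perm 'I_n}) F (s m) k.
  have Seq : forall m, S0 m = S0 i.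
    move=> m; rewrite /S0 (reindex_inj (mulgI (tperm m i))) /=.
    by apply: eq_bigr => s _; rewrite permM tpermL.
  have e1 : \sum_m S0 m = T *+ N.
    rewrite /S0 exchange_big /= -sumN; apply: eq_bigr => s _.
    by rewrite /T [in RHS](reindex_inj (@perm_inj _ s)).
  have e2 : \sum_(m < n) S0 m = S0 i *+ n.
    by rewrite (eq_bigr (fun _ => S0 i)) ?sumr_const ?card_ord // => m _; rewrite Seq.
  have e3 : n%:R * S0 i = N%:R * T.
    by rewrite !mulr_natl -e2 e1.
  have := solve_mul n0 N0 e3; rewrite /S0 => <-; by [].
have eG : Gsym G = Gav.
  apply: functional_extensionality => i; apply: functional_extensionality => j.
  rewrite /Gsym /Gav /permG.
  pose M := fun x y => \sum_(s : {perm 'I_n}) G (s x) (s y).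
  rewrite -/(M i j).
  have Mre : forall (u : {perm 'I_n}) x y, M x y = M (u x) (u y).
    move=> u x y; rewrite /M (reindex_inj (mulgI u)) /=.
    by apply: eq_bigr => s _; rewrite !permM.
  case: eqP => [<-|/eqP ij].
    rewrite /GA.
    set T := \sum_(m < n) G m m.
    have e1 : \sum_m M m m = T *+ N.
      rewrite /M exchange_big /= -sumN; apply: eq_bigr => s _.
      by rewrite /T [in RHS](reindex_inj (@perm_inj _ s)).
    have e2 : \sum_(m < n) M m m = M i i *+ n.
      rewrite (eq_bigr (fun _ => M i i)) ?sumr_const ?card_ord // => m _.
      by rewrite (Mre (tperm m i)) tpermL.
    have e3 : n%:R *: M i i = N%:R *: T by rewrite !scaler_nat -e2 e1.
    by rewrite (solve_scal n0 N0 e3).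
  rewrite /GC.
  set T := \sum_(x < n) \sum_(y < n | y != x) G x y.
  have Moff : forall x y, x != y -> M x y = M i j.
    move=> x y xy.
    pose j' := tperm x i y.
    have j'i : j' != i.
      apply/eqP => h; move/eqP: xy; apply.
      apply: (@perm_inj _ (tperm x i)); by rewrite -/j' h tpermL.
    rewrite (Mre (tperm x i * tperm j' j)%g) !permM tpermL -/j' tpermL.
    by rewrite tpermD // eq_sym.
  have e1 : \sum_(x < n) \sum_(y < n | y != x) M x y = T *+ N.
    rewrite /M.
    under eq_bigr do rewrite exchange_big /=.
    rewrite exchange_big /= -sumN; apply: eq_bigr => s _.
    rewrite /T [in RHS](reindex_inj (@perm_inj _ s)) /=; apply: eq_bigr => x _.
    rewrite [in RHS](reindex_inj (@perm_inj _ s)) /=; apply: eq_bigl => y.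
    by rewrite (inj_eq (@perm_inj _ s)).
  have e2 : \sum_(x < n) \sum_(y < n | y != x) M x y = M i j *+ (n * (n - 1)).
    transitivity (\sum_(x < n) (M i j *+ (n - 1))).
      apply: eq_bigr => x _.
      transitivity (\sum_(y in predC1 x) M i j).
        apply: eq_big => y; first by rewrite inE.
        by move=> yx; apply: Moff; rewrite eq_sym.
      by rewrite sumr_const cardC1 card_ord subn1.
    by rewrite sumr_const card_ord -mulrnA mulnC.
  have nn0 : (n * (n - 1) != 0)%N by rewrite muln_eq0 negb_or n0 subn_eq0 -ltnNge.
  have e3 : (n * (n - 1))%:R *: M i j = N%:R *: T by rewrite !scaler_nat -e2 e1.
  by rewrite (solve_scal nn0 N0 e3).
rewrite eF eG.
have FavE : forall i k, Fav i k = a * \sum_(s : {perm 'I_n}) permF s F i k.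
  by move=> i k; rewrite /Fav mxE summxE.
have GavE : forall i j k l, Gav i j k l = a * \sum_(s : {perm 'I_n}) permG s G i j k l.
  by move=> i j k l; rewrite /Gav mxE summxE.
have lmiE : forall c : cI P, lmi_val c Fav Gav
    = a *: \sum_(s : {perm 'I_n}) lmi_val c (permF s F) (permG s G).
  move=> c; rewrite /lmi_val.
  have -> : \sum_i \sum_k Fav i k *: cF c i k
      = \sum_i \sum_k (a * \sum_(s : {perm 'I_n}) permF s F i k) *: cF c i k.
    by apply: eq_bigr => i _; apply: eq_bigr => k _; rewrite FavE.
  have -> : \sum_i \sum_j \sum_k \sum_l Gav i j k l *: cG c i j k l
      = \sum_i \sum_j \sum_k \sum_l
          (a * \sum_(s : {perm 'I_n}) permG s G i j k l) *: cG c i j k l.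
    by apply: eq_bigr => i _; apply: eq_bigr => j _; apply: eq_bigr => k _;
       apply: eq_bigr => l _; rewrite GavE.
  rewrite avg2 avg4 !big_split /= sumN !scalerDr. rewrite -scaler_nat scalerA aN scale1r.
  by [].
have objE : objective P Fav Gav
    = a * \sum_(s : {perm 'I_n}) objective P (permF s F) (permG s G).
  rewrite /objective.
  have -> : \sum_i \sum_k oF P i k * Fav i k
      = \sum_i \sum_k oF P i k * (a * \sum_(s : {perm 'I_n}) permF s F i k).
    by apply: eq_bigr => i _; apply: eq_bigr => k _; rewrite FavE.
  have -> : \sum_i \sum_j \sum_k \sum_l oG P i j k l * Gav i j k l
      = \sum_i \sum_j \sum_k \sum_l
          oG P i j k l * (a * \sum_(s : {perm 'I_n}) permG s G i j k l).
    by apply: eq_bigr => i _; apply: eq_bigr => j _; apply: eq_bigr => k _;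
       apply: eq_bigr => l _; rewrite GavE.
  rewrite avg2m avg4m !big_split /= sumN !mulrDr -mulr_natr mulrCA aN mulr1.
  by [].
split.
  split.
    by apply: bpsd_avg => // s; case: (perm_ok s F G Hfeas) => [[]].
  move=> c; rewrite lmiE; apply: psd_avg => // s.
  by case: (perm_ok s F G Hfeas) => [[]].
rewrite objE (eq_bigr (fun _ => objective P F G)).
  by rewrite sumN -mulr_natr mulrCA aN mulr1.
by move=> s _; case: (perm_ok s F G Hfeas).
Qed.
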